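(* Let $(E_j)_{j\in J}$ be a family of nonzero complete metrizable topological vector spaces with $J$ uncountable, and let $E_0=\{(x_j)\in\prod_{j\in J}E_j:|\{j:x_j\ne0\}|\le\aleph_0\}$ be the $\Sigma$-product, with the subspace topology of the product. Then $E_0$ is a Baire, non-metrizable Fréchet–Urysohn topological vector space which does not have countable $cn$-character.
   Context: For $x\in X$, a family $\mathcal{N}$ of subsets of $X$ is a $cn$-network at $x$ if for each neighborhood $O_x$ of $x$ the set $\bigcup\{N\in\mathcal{N}:x\in N\subseteq O_x\}$ is a neighborhood of $x$; the $cn$-character of $X$ is the supremum over $x$ of the least cardinality of a $cn$-network at $x$. *)

(* Defs.v *)
From Stdlib Require Import Reals List Arith Classical.
Open Scope R_scope.

Definition countable_set {T : Type} (A : T -> Prop) : Prop :=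
  exists s : nat -> option T, forall t, A t -> exists n, s n = Some t.

Definition is_topology {X : Type} (op : (X -> Prop) -> Prop) : Prop :=
  op (fun _ => True) /\
  (forall U V, op U -> op V -> op (fun x => U x /\ V x)) /\
  (forall F : (X -> Prop) -> Prop,
      (forall U, F U -> op U) -> op (fun x => exists U, F U /\ U x)).

Record is_vector_space {X : Type} (z : X) (add : X -> X -> X) (opp : X -> X)
    (scale : R -> X -> X) : Prop := {
  vs_addA : forall x y w, add x (add y w) = add (add x y) w;
  vs_addC : forall x y, add x y = add y x;
  vs_add0 : forall x, add x z = x;
  vs_addN : forall x, add x (opp x) = z;
  vs_scaleA : forall a b x, scale a (scale b x) = scale (a * b) x;
  vs_scale1 : forall x, scale 1 x = x;
  vs_scaleDr : forall a x y, scale a (add x y) = add (scale a x) (scale a y);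
  vs_scaleDl : forall a b x, scale (a + b) x = add (scale a x) (scale b x) }.

(* continuity of X x X -> X at every point, for the product topology *)
Definition add_continuous {X : Type} (op : (X -> Prop) -> Prop)
    (add : X -> X -> X) : Prop :=
  forall x y W, op W -> W (add x y) ->
    exists U V, op U /\ op V /\ U x /\ V y /\
      forall a b, U a -> V b -> W (add a b).

(* continuity of R x X -> X at every point (usual topology on R) *)
Definition scale_continuous {X : Type} (op : (X -> Prop) -> Prop)
    (scale : R -> X -> X) : Prop :=
  forall t x W, op W -> W (scale t x) ->
    exists d V, 0 < d /\ op V /\ V x /\
      forall s b, Rabs (s - t) < d -> V b -> W (scale s b).

Record is_tvs {X : Type} (z : X) (add : X -> X -> X) (opp : X -> X)
    (scale : R -> X -> X) (op : (X -> Prop) -> Prop) : Prop := {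
  tvs_vs : is_vector_space z add opp scale;
  tvs_top : is_topology op;
  tvs_add_cont : add_continuous op add;
  tvs_scale_cont : scale_continuous op scale }.

Record tvs : Type := {
  tv_car :> Type;
  tv_zero : tv_car;
  tv_add : tv_car -> tv_car -> tv_car;
  tv_opp : tv_car -> tv_car;
  tv_scale : R -> tv_car -> tv_car;
  tv_open : (tv_car -> Prop) -> Prop;
  tv_ax : is_tvs tv_zero tv_add tv_opp tv_scale tv_open }.

Definition nonzero_tvs (E : tvs) : Prop := exists x : E, x <> tv_zero E.

Definition is_metric {X : Type} (d : X -> X -> R) : Prop :=
  (forall x y, 0 <= d x y) /\ (forall x y, d x y = 0 <-> x = y) /\
  (forall x y, d x y = d y x) /\ (forall x y w, d x w <= d x y + d y w).

Definition metric_induces {X : Type} (op : (X -> Prop) -> Prop)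
    (d : X -> X -> R) : Prop :=
  forall U, op U <-> (forall x, U x -> exists e, 0 < e /\ forall y, d x y < e -> U y).

Definition metrizable {X : Type} (op : (X -> Prop) -> Prop) : Prop :=
  exists d, is_metric d /\ metric_induces op d.

Definition cauchy_seq {X : Type} (d : X -> X -> R) (u : nat -> X) : Prop :=
  forall e, 0 < e -> exists N, forall m n, (N <= m)%nat -> (N <= n)%nat -> d (u m) (u n) < e.

Definition metric_conv {X : Type} (d : X -> X -> R) (u : nat -> X) (l : X) : Prop :=
  forall e, 0 < e -> exists N, forall n, (N <= n)%nat -> d (u n) l < e.

(* complete metrizable TVS (F-space): topology given by a complete
   translation-invariant metric *)
Definition complete_metrizable_tvs (E : tvs) : Prop :=
  exists d : E -> E -> R, is_metric d /\ metric_induces (tv_open E) d /\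
    (forall x y w, d (tv_add E x w) (tv_add E y w) = d x y) /\
    (forall u, cauchy_seq d u -> exists l, metric_conv d u l).

Definition is_nbhd {X : Type} (op : (X -> Prop) -> Prop) (x : X) (N : X -> Prop) : Prop :=
  exists U, op U /\ U x /\ forall y, U y -> N y.

Definition dense {X : Type} (op : (X -> Prop) -> Prop) (D : X -> Prop) : Prop :=
  forall U, op U -> (exists x, U x) -> exists x, U x /\ D x.

Definition baire {X : Type} (op : (X -> Prop) -> Prop) : Prop :=
  forall D : nat -> X -> Prop, (forall n, op (D n) /\ dense op (D n)) ->
    dense op (fun x => forall n, D n x).

Definition seq_conv {X : Type} (op : (X -> Prop) -> Prop) (u : nat -> X) (x : X) : Prop :=
  forall U, op U -> U x -> exists N, forall n, (N <= n)%nat -> U (u n).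

Definition frechet_urysohn {X : Type} (op : (X -> Prop) -> Prop) : Prop :=
  forall (A : X -> Prop) (x : X),
    (forall U, op U -> U x -> exists a, U a /\ A a) ->
    exists u : nat -> X, (forall n, A (u n)) /\ seq_conv op u x.

Definition cn_network {X : Type} (op : (X -> Prop) -> Prop) (x : X)
    (NN : (X -> Prop) -> Prop) : Prop :=
  forall O, is_nbhd op x O ->
    is_nbhd op x (fun y => exists N, NN N /\ N x /\ (forall w, N w -> O w) /\ N y).

Definition countable_cn_character {X : Type} (op : (X -> Prop) -> Prop) : Prop :=
  forall x, exists NN, countable_set NN /\ cn_network op x NN.

Definition prod_open {J : Type} (E : J -> tvs) (U : (forall j, E j) -> Prop) : Prop :=
  forall x, U x -> exists (l : list J) (V : forall j, E j -> Prop),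
    (forall j, In j l -> tv_open (E j) (V j) /\ V j (x j)) /\
    (forall y, (forall j, In j l -> V j (y j)) -> U y).

Definition supp {J : Type} {E : J -> tvs} (x : forall j, E j) : J -> Prop :=
  fun j => x j <> tv_zero (E j).

Definition sigma_product {J : Type} (E : J -> tvs) : Type :=
  { x : forall j, E j | countable_set (supp x) }.

Definition sigma_open {J : Type} (E : J -> tvs) (W : sigma_product E -> Prop) : Prop :=
  exists O, prod_open E O /\ forall z, W z <-> O (proj1_sig z).

Lemma vs_scale0 (E : tvs) a : tv_scale E a (tv_zero E) = tv_zero E.
Proof.
  destruct (tvs_vs _ _ _ _ _ (tv_ax E)) as [A C Z N _ _ Dr _].
  assert (H : tv_scale E a (tv_zero E) = tv_add E (tv_scale E a (tv_zero E)) (tv_scale E a (tv_zero E)))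
    by (rewrite <- Dr, Z; reflexivity).
  remember (tv_scale E a (tv_zero E)) as s eqn:Hs. clear Hs.
  transitivity (tv_add E s (tv_add E s (tv_opp E s))).
  - rewrite N, Z. reflexivity.
  - rewrite A, <- H, N. reflexivity.
Qed.

Lemma vs_opp0 (E : tvs) : tv_opp E (tv_zero E) = tv_zero E.
Proof.
  destruct (tvs_vs _ _ _ _ _ (tv_ax E)) as [A C Z N _ _ _ _].
  transitivity (tv_add E (tv_opp E (tv_zero E)) (tv_zero E)).
  - rewrite Z. reflexivity.
  - rewrite C, N. reflexivity.
Qed.

Lemma countable_union {T : Type} (A B : T -> Prop) :
  countable_set A -> countable_set B -> countable_set (fun t => A t \/ B t).
Proof.
  intros [s1 H1] [s2 H2].
  exists (fun n => if Nat.even n then s1 (Nat.div2 n) else s2 (Nat.div2 n)).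
  intros t [Ht|Ht].
  - destruct (H1 t Ht) as [m Hm]. exists (2 * m)%nat.
    rewrite Nat.even_mul, Nat.div2_double. exact Hm.
  - destruct (H2 t Ht) as [m Hm]. exists (S (2 * m))%nat.
    rewrite Nat.even_succ, Nat.odd_mul, Nat.div2_succ_double. exact Hm.
Qed.

Lemma countable_sub {T : Type} (A B : T -> Prop) :
  (forall t, A t -> B t) -> countable_set B -> countable_set A.
Proof. intros H [s Hs]. exists s. intros t Ht. exact (Hs t (H t Ht)). Qed.

Lemma sigma_zero_proof {J : Type} (E : J -> tvs) :
  countable_set (supp (fun j => tv_zero (E j))).
Proof. exists (fun _ => None). intros t Ht. exfalso. apply Ht. reflexivity. Qed.

Lemma sigma_add_proof {J : Type} (E : J -> tvs) (x y : sigma_product E) :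
  countable_set (supp (fun j => tv_add (E j) (proj1_sig x j) (proj1_sig y j))).
Proof.
  destruct x as [x hx], y as [y hy]; simpl.
  apply (countable_sub _ (fun t => supp x t \/ supp y t)).
  - intros j Hj. unfold supp in *; cbv beta in *.
    destruct (classic (x j = tv_zero (E j))) as [Hx|Hx]; [|now left].
    destruct (classic (y j = tv_zero (E j))) as [Hy|Hy]; [|now right].
    exfalso. apply Hj. rewrite Hx, Hy. apply (vs_add0 _ _ _ _ (tvs_vs _ _ _ _ _ (tv_ax (E j)))).
  - apply countable_union; assumption.
Qed.

Lemma sigma_opp_proof {J : Type} (E : J -> tvs) (x : sigma_product E) :
  countable_set (supp (fun j => tv_opp (E j) (proj1_sig x j))).
Proof.
  destruct x as [x hx]; simpl.
  apply (countable_sub _ (supp x)); [|exact hx].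
  intros j Hj Hx. unfold supp in *; cbv beta in *. apply Hj. rewrite Hx. apply vs_opp0.
Qed.

Lemma sigma_scale_proof {J : Type} (E : J -> tvs) (a : R) (x : sigma_product E) :
  countable_set (supp (fun j => tv_scale (E j) a (proj1_sig x j))).
Proof.
  destruct x as [x hx]; simpl.
  apply (countable_sub _ (supp x)); [|exact hx].
  intros j Hj Hx. unfold supp in *; cbv beta in *. apply Hj. rewrite Hx. apply vs_scale0.
Qed.

Definition sigma_zero {J : Type} (E : J -> tvs) : sigma_product E :=
  exist (fun z : forall j, E j => countable_set (supp z)) (fun j => tv_zero (E j)) (sigma_zero_proof E).
Definition sigma_add {J : Type} (E : J -> tvs) (x y : sigma_product E) : sigma_product E :=
  exist (fun z : forall j, E j => countable_set (supp z))
    (fun j => tv_add (E j) (proj1_sig x j) (proj1_sig y j)) (sigma_add_proof E x y).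
Definition sigma_opp {J : Type} (E : J -> tvs) (x : sigma_product E) : sigma_product E :=
  exist (fun z : forall j, E j => countable_set (supp z))
    (fun j => tv_opp (E j) (proj1_sig x j)) (sigma_opp_proof E x).
Definition sigma_scale {J : Type} (E : J -> tvs) (a : R) (x : sigma_product E) : sigma_product E :=
  exist (fun z : forall j, E j => countable_set (supp z))
    (fun j => tv_scale (E j) a (proj1_sig x j)) (sigma_scale_proof E a x).

(* Main.v *)
Require Import Defs.
From Stdlib Require Import Reals List Lra Lia Classical ClassicalEpsilon FunctionalExtensionality PropExtensionality ProofIrrelevance.
From Stdlib Require Cantor.
Open Scope R_scope.


Lemma choice_dep {A : Type} {B : A -> Type} (P : forall a, B a -> Prop) :
  (forall a, exists b, P a b) -> exists f : forall a, B a, forall a, P a (f a).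
Proof.
  intros H. exists (fun a => proj1_sig (constructive_indefinite_description _ (H a))).
  intros a. exact (proj2_sig (constructive_indefinite_description _ (H a))).
Qed.

Lemma set_ext {X : Type} (U V : X -> Prop) : (forall x, U x <-> V x) -> U = V.
Proof. intros H. apply functional_extensionality. intros x. apply propositional_extensionality. apply H. Qed.

Lemma vsE (E : tvs) : is_vector_space (tv_zero E) (tv_add E) (tv_opp E) (tv_scale E).
Proof. exact (tvs_vs _ _ _ _ _ (tv_ax E)). Qed.
Lemma topE (E : tvs) : is_topology (tv_open E).
Proof. exact (tvs_top _ _ _ _ _ (tv_ax E)). Qed.

Lemma open_ext (E : tvs) (U V : E -> Prop) : tv_open E U -> (forall x, U x <-> V x) -> tv_open E V.
Proof. intros H H'. rewrite <- (set_ext U V H'). exact H. Qed.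

Lemma open_True (E : tvs) : tv_open E (fun _ => True).
Proof. destruct (topE E) as [H _]. exact H. Qed.

Lemma open_inter (E : tvs) (U V : E -> Prop) : tv_open E U -> tv_open E V -> tv_open E (fun x => U x /\ V x).
Proof. destruct (topE E) as [_ [H _]]. apply H. Qed.

Lemma open_impl (E : tvs) (P : Prop) (A : E -> Prop) : (P -> tv_open E A) -> tv_open E (fun y => P -> A y).
Proof.
  intros H. destruct (classic P) as [p|np].
  - apply (open_ext E A). apply H, p. intros x; tauto.
  - apply (open_ext E (fun _ => True)). apply open_True. intros x; tauto.
Qed.

Lemma scale0 (E : tvs) (x : E) : tv_scale E 0 x = tv_zero E.
Proof.
  destruct (vsE E) as [A C Z N _ _ _ Dl].
  assert (H : tv_scale E 0 x = tv_add E (tv_scale E 0 x) (tv_scale E 0 x))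
    by (rewrite <- Dl, Rplus_0_r; reflexivity).
  remember (tv_scale E 0 x) as s eqn:Hs. clear Hs.
  transitivity (tv_add E s (tv_add E s (tv_opp E s))).
  - rewrite N, Z. reflexivity.
  - rewrite A, <- H, N. reflexivity.
Qed.

Lemma sig_eq {J : Type} {E : J -> tvs} (a b : sigma_product E) :
  proj1_sig a = proj1_sig b -> a = b.
Proof.
  destruct a as [a ha], b as [b hb]; simpl. intros ->. f_equal. apply proof_irrelevance.
Qed.

Definition cyl {J : Type} (E : J -> tvs) (l : list J) (V : forall j, E j -> Prop) : sigma_product E -> Prop :=
  fun w => forall j, In j l -> V j (proj1_sig w j).

Lemma cyl_open {J : Type} (E : J -> tvs) l V :
  (forall j, In j l -> tv_open (E j) (V j)) -> sigma_open E (cyl E l V).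
Proof.
  intros H. exists (fun x => forall j, In j l -> V j (x j)). split.
  - intros x Hx. exists l, V. split.
    + intros j Hj. split; auto.
    + auto.
  - intros z. unfold cyl. tauto.
Qed.

Lemma sigma_open_basic {J : Type} (E : J -> tvs) W z :
  sigma_open E W -> W z ->
  exists l V, (forall j, In j l -> tv_open (E j) (V j) /\ V j (proj1_sig z j)) /\
    forall w, cyl E l V w -> W w.
Proof.
  intros [O [HO HW]] Hz. apply HW in Hz. destruct (HO _ Hz) as [l [V [H1 H2]]].
  exists l, V. split; auto. intros w Hw. apply HW. apply H2. exact Hw.
Qed.

Lemma prod_open_inter {J : Type} (E : J -> tvs) O1 O2 :
  prod_open E O1 -> prod_open E O2 -> prod_open E (fun x => O1 x /\ O2 x).
Proof.
  intros H1 H2 x [x1 x2].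
  destruct (H1 x x1) as [l1 [V1 [A1 B1]]]. destruct (H2 x x2) as [l2 [V2 [A2 B2]]].
  exists (l1 ++ l2), (fun j y => (In j l1 -> V1 j y) /\ (In j l2 -> V2 j y)). split.
  - intros j Hj. split.
    + apply open_inter; apply open_impl; intros h; [apply A1|apply A2]; exact h.
    + split; intros h; [apply A1|apply A2]; exact h.
  - intros y Hy. split.
    + apply B1. intros j Hj. apply (Hy j). apply in_or_app; auto. exact Hj.
    + apply B2. intros j Hj. apply (Hy j). apply in_or_app; auto. exact Hj.
Qed.

Lemma sigma_top {J : Type} (E : J -> tvs) : is_topology (sigma_open E).
Proof.
  split; [|split].
  - exists (fun _ => True). split.
    + intros x _. exists nil, (fun _ _ => True). simpl. split; [tauto|auto].
    + tauto.
  - intros U V [O1 [H1 E1]] [O2 [H2 E2]]. exists (fun x => O1 x /\ O2 x). split.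
    + apply prod_open_inter; auto.
    + intros z. rewrite E1, E2. tauto.
  - intros F HF.
    exists (fun x => exists W O, F W /\ prod_open E O /\ (forall z, W z <-> O (proj1_sig z)) /\ O x).
    split.
    + intros x [W [O [FW [HO [HWO Ox]]]]]. destruct (HO x Ox) as [l [V [A B]]].
      exists l, V. split; auto. intros y Hy. exists W, O. repeat split; auto.
      * apply HWO; assumption.
      * apply HWO; assumption.
    + intros z. split.
      * intros [W [FW Wz]]. destruct (HF W FW) as [O [HO HWO]].
        exists W, O. repeat split; auto; apply HWO; assumption.
      * intros [W [O [FW [HO [HWO Oz]]]]]. exists W. split; auto. apply HWO; exact Oz.
Qed.

Fixpoint lmin {J : Type} (f : J -> R) (l : list J) (b : R) : R :=
  match l with nil => b | j :: l' => Rmin (f j) (lmin f l' b) end.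

Lemma lmin_le_b {J : Type} (f : J -> R) l b : lmin f l b <= b.
Proof. induction l; simpl. lra. pose proof (Rmin_r (f a) (lmin f l b)). lra. Qed.

Lemma lmin_le {J : Type} (f : J -> R) l b j : In j l -> lmin f l b <= f j.
Proof.
  induction l; simpl. tauto. intros [<-|H].
  - apply Rmin_l.
  - pose proof (Rmin_r (f a) (lmin f l b)). specialize (IHl H). lra.
Qed.

Lemma lmin_pos {J : Type} (f : J -> R) l b : 0 < b -> (forall j, In j l -> 0 < f j) -> 0 < lmin f l b.
Proof.
  intros Hb H. induction l; simpl; auto.
  apply Rmin_glb_lt. apply H; simpl; auto. apply IHl. intros j Hj; apply H; simpl; auto.
Qed.

Lemma sigma_vs {J : Type} (E : J -> tvs) :
  is_vector_space (sigma_zero E) (sigma_add E) (sigma_opp E) (sigma_scale E).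
Proof.
  split; intros; apply sig_eq; simpl; apply functional_extensionality_dep; intros j.
  - apply (vs_addA _ _ _ _ (vsE (E j))).
  - apply (vs_addC _ _ _ _ (vsE (E j))).
  - apply (vs_add0 _ _ _ _ (vsE (E j))).
  - apply (vs_addN _ _ _ _ (vsE (E j))).
  - apply (vs_scaleA _ _ _ _ (vsE (E j))).
  - apply (vs_scale1 _ _ _ _ (vsE (E j))).
  - apply (vs_scaleDr _ _ _ _ (vsE (E j))).
  - apply (vs_scaleDl _ _ _ _ (vsE (E j))).
Qed.

Lemma sigma_add_cont {J : Type} (E : J -> tvs) : add_continuous (sigma_open E) (sigma_add E).
Proof.
  intros x y W HW Wxy.
  destruct (sigma_open_basic E W _ HW Wxy) as [l [V [H1 H2]]].
  assert (Hc : forall j, exists p : (E j -> Prop) * (E j -> Prop), In j l ->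
     tv_open (E j) (fst p) /\ tv_open (E j) (snd p) /\ fst p (proj1_sig x j) /\ snd p (proj1_sig y j) /\
     forall a b, fst p a -> snd p b -> V j (tv_add (E j) a b)).
  { intros j. destruct (classic (In j l)) as [h|h].
    - destruct (H1 j h) as [o v].
      destruct (tvs_add_cont _ _ _ _ _ (tv_ax (E j)) _ _ _ o v) as [U [U' HU]].
      exists (U, U'). intros _. exact HU.
    - exists (fun _ => True, fun _ => True). tauto. }
  destruct (choice_dep _ Hc) as [f Hf].
  exists (cyl E l (fun j => fst (f j))), (cyl E l (fun j => snd (f j))).
  split; [apply cyl_open; intros; apply Hf; auto|].
  split; [apply cyl_open; intros; apply Hf; auto|].
  split; [intros j Hj; apply Hf; auto|].
  split; [intros j Hj; apply Hf; auto|].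
  intros a b Ha Hb. apply H2. intros j Hj. simpl. apply (Hf j Hj); auto.
Qed.

Lemma sigma_scale_cont {J : Type} (E : J -> tvs) : scale_continuous (sigma_open E) (sigma_scale E).
Proof.
  intros t x W HW Wtx.
  destruct (sigma_open_basic E W _ HW Wtx) as [l [V [H1 H2]]].
  assert (Hc : forall j, exists p : R * (E j -> Prop), In j l ->
     0 < fst p /\ tv_open (E j) (snd p) /\ snd p (proj1_sig x j) /\
     forall s b, Rabs (s - t) < fst p -> snd p b -> V j (tv_scale (E j) s b)).
  { intros j. destruct (classic (In j l)) as [h|h].
    - destruct (H1 j h) as [o v].
      destruct (tvs_scale_cont _ _ _ _ _ (tv_ax (E j)) _ _ _ o v) as [d [U HU]].
      exists (d, U). intros _. exact HU.
    - exists (1, fun _ => True). tauto. }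
  destruct (choice_dep _ Hc) as [f Hf].
  exists (lmin (fun j => fst (f j)) l 1), (cyl E l (fun j => snd (f j))).
  split; [apply lmin_pos; [lra|intros j Hj; apply Hf; auto]|].
  split; [apply cyl_open; intros; apply Hf; auto|].
  split; [intros j Hj; apply Hf; auto|].
  intros s b Hs Hb. apply H2. intros j Hj. simpl. apply (Hf j Hj); auto.
  pose proof (lmin_le (fun j => fst (f j)) l 1 j Hj). simpl in H. lra.
Qed.

Lemma sigma_tvs {J : Type} (E : J -> tvs) :
  is_tvs (sigma_zero E) (sigma_add E) (sigma_opp E) (sigma_scale E) (sigma_open E).
Proof.
  split. apply sigma_vs. apply sigma_top. apply sigma_add_cont. apply sigma_scale_cont.
Qed.

Definition good_metric (E : tvs) (d : E -> E -> R) : Prop :=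
  is_metric d /\ metric_induces (tv_open E) d /\
    (forall x y w, d (tv_add E x w) (tv_add E y w) = d x y) /\
    (forall u, cauchy_seq d u -> exists l, metric_conv d u l).

Lemma le_eps (a b : R) : (forall e, 0 < e -> a < b + e) -> a <= b.
Proof.
  intros H. destruct (Rle_or_lt a b) as [h|h]; auto.
  specialize (H ((a - b)/2)). lra.
Qed.

Lemma ball_open (E : tvs) d (Hd : good_metric E d) x r : tv_open E (fun y => d x y < r).
Proof.
  destruct Hd as [[M0 [M1 [M2 M3]]] [Hi _]]. apply Hi. intros y Hy.
  exists (r - d x y). split. lra. intros z Hz. pose proof (M3 x y z). lra.
Qed.

Lemma open_ball (E : tvs) d (Hd : good_metric E d) U x :
  tv_open E U -> U x -> exists e, 0 < e /\ forall y, d x y < e -> U y.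
Proof. destruct Hd as [_ [Hi _]]. intros HU Ux. apply Hi; auto. Qed.

Lemma countable_family {J : Type} (L : nat -> list J) : countable_set (fun j => exists m, In j (L m)).
Proof.
  exists (fun p => let (m, i) := Cantor.of_nat p in nth_error (L m) i).
  intros j [m Hm]. destruct (In_nth_error _ _ Hm) as [i Hi].
  exists (Cantor.to_nat (m, i)). rewrite Cantor.cancel_of_to. exact Hi.
Qed.

Definition cball {J : Type} (E : J -> tvs) (dd : forall j, E j -> E j -> R)
  (x : sigma_product E) (F : list J) (r : R) : sigma_product E -> Prop :=
  fun z => forall j, In j F -> dd j (proj1_sig x j) (proj1_sig z j) <= r.

Definition oball {J : Type} (E : J -> tvs) (dd : forall j, E j -> E j -> R)
  (x : sigma_product E) (F : list J) (r : R) : sigma_product E -> Prop :=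
  cyl E F (fun j y => dd j (proj1_sig x j) y < r).

Lemma oball_open {J : Type} (E : J -> tvs) dd (Hd : forall j, good_metric (E j) (dd j)) x F r :
  sigma_open E (oball E dd x F r).
Proof. apply cyl_open. intros j _. apply ball_open. apply Hd. Qed.

Lemma step_lemma {J : Type} (E : J -> tvs) dd (Hd : forall j, good_metric (E j) (dd j)) G x b :
  sigma_open E G -> G x -> 0 < b ->
  exists F r, 0 < r /\ r <= b /\ forall z, cball E dd x F r z -> G z.
Proof.
  intros HG Gx Hb. destruct (sigma_open_basic E G x HG Gx) as [l [V [H1 H2]]].
  assert (Hc : forall j, exists e : R, In j l -> 0 < e /\ forall y, dd j (proj1_sig x j) y < e -> V j y).
  { intros j. destruct (classic (In j l)) as [h|h].
    - destruct (H1 j h) as [o v]. destruct (open_ball _ _ (Hd j) _ _ o v) as [e He].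
      exists e. intros _. exact He.
    - exists 1. tauto. }
  destruct (choice_dep _ Hc) as [f Hf].
  exists l, (lmin (fun j => f j / 2) l b).
  assert (Hp : 0 < lmin (fun j => f j / 2) l b).
  { apply lmin_pos; auto. intros j Hj. destruct (Hf j Hj). lra. }
  split; [auto|]. split; [apply lmin_le_b|].
  intros z Hz. apply H2. intros j Hj. apply (Hf j Hj).
  pose proof (lmin_le (fun j => f j / 2) l b j Hj). simpl in H. specialize (Hz j Hj).
  destruct (Hf j Hj). lra.
Qed.

Definition bstate {J : Type} (E : J -> tvs) : Type := (sigma_product E * list J * R)%type.

Definition brel {J : Type} (E : J -> tvs) dd (D : nat -> sigma_product E -> Prop) (n : nat)
  (st st' : bstate E) : Prop :=
  0 < snd st' /\ snd st' <= snd st / 2 /\ incl (snd (fst st)) (snd (fst st')) /\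
  forall z, cball E dd (fst (fst st')) (snd (fst st')) (snd st') z ->
     D n z /\ oball E dd (fst (fst st)) (snd (fst st)) (snd st) z.

Lemma brel_ex {J : Type} (E : J -> tvs) dd (Hd : forall j, good_metric (E j) (dd j)) D
  (HD : forall n, sigma_open E (D n) /\ dense (sigma_open E) (D n)) n st :
  0 < snd st -> exists st', brel E dd D n st st'.
Proof.
  destruct st as [[x F] r]; simpl. intros Hr.
  destruct (HD n) as [o dn].
  destruct (dn (oball E dd x F r) (oball_open E dd Hd x F r)) as [x' [H1 H2]].
  { exists x. intros j _. simpl. destruct (Hd j) as [[_ [M1 _]] _]. rewrite (proj2 (M1 _ _) eq_refl). lra. }
  destruct (step_lemma E dd Hd (fun z => D n z /\ oball E dd x F r z) x' (r/2)) as [F' [r' [A [B C]]]].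
  - apply (sigma_top E); auto. apply oball_open; auto.
  - auto.
  - lra.
  - exists (x', F' ++ F, r'). unfold brel; simpl. split; auto. split; auto. split.
    + intros j h. apply in_or_app; auto.
    + intros z Hz. apply C. intros j Hj. apply Hz. apply in_or_app; auto.
Qed.

Lemma sigma_baire {J : Type} (E : J -> tvs) dd (Hd : forall j, good_metric (E j) (dd j)) :
  baire (sigma_open E).
Proof.
  intros D HD U HU [x0 Ux0].
  destruct (step_lemma E dd Hd U x0 1 HU Ux0 Rlt_0_1) as [F0 [r0 [Hr0 [_ HF0]]]].
  pose (nxt := fun n (st : bstate E) => epsilon (inhabits st) (brel E dd D n st)).
  pose (stf := nat_rect (fun _ => bstate E) (x0, F0, r0) nxt).
  assert (Pos : forall n, 0 < snd (stf n) /\ brel E dd D n (stf n) (stf (S n))).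
  { induction n.
    - split. simpl. exact Hr0. simpl. apply epsilon_spec. apply brel_ex; auto.
    - destruct IHn as [_ [h _]]. split. exact h. simpl. apply epsilon_spec. apply brel_ex; auto. }
  pose (xs := fun n => fst (fst (stf n))). pose (Fs := fun n => snd (fst (stf n))).
  pose (rs := fun n => snd (stf n)).
  assert (Hrs : forall n, rs n <= r0 * (/2) ^ n).
  { induction n. unfold rs; simpl; lra.
    destruct (Pos n) as [_ [_ [h _]]]. fold (rs (S n)) (rs n) in h. simpl. lra. }
  assert (Hincl : forall n k, incl (Fs n) (Fs (k + n)%nat)).
  { intros n k. induction k. simpl; apply incl_refl.
    destruct (Pos (k + n)%nat) as [_ [_ [_ [h _]]]]. eapply incl_tran. exact IHk. exact h. }
  assert (Hnest : forall n k z, cball E dd (xs (k+n)%nat) (Fs (k+n)%nat) (rs (k+n)%nat) z ->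
                                cball E dd (xs n) (Fs n) (rs n) z).
  { intros n k z. induction k; auto. intros Hz. apply IHk.
    destruct (Pos (k + n)%nat) as [_ [_ [_ [_ h]]]]. destruct (h z Hz) as [_ h2].
    intros j Hj. apply Rlt_le. apply (h2 j Hj). }
  assert (Hself : forall n, cball E dd (xs n) (Fs n) (rs n) (xs n)).
  { intros n j _. destruct (Hd j) as [[_ [M1 _]] _]. rewrite (proj2 (M1 _ _) eq_refl).
    left. apply (Pos n). }
  assert (Hdist : forall m k j, (m <= k)%nat -> In j (Fs m) ->
           dd j (proj1_sig (xs m) j) (proj1_sig (xs k) j) <= rs m).
  { intros m k j Hmk Hj. replace k with ((k - m) + m)%nat in * by lia.
    apply (Hnest m (k - m)%nat); auto. }
  assert (Hcau : forall j m, In j (Fs m) -> cauchy_seq (dd j) (fun k => proj1_sig (xs k) j)).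
  { intros j m Hj e He.
    destruct (pow_lt_1_zero (/2)) with (y := e / (2 * r0)) as [N1 HN1].
    { rewrite Rabs_right; lra. }
    { apply Rdiv_lt_0_compat; lra. }
    exists (Nat.max m N1). intros a b Ha Hb.
    set (N := Nat.max m N1) in *.
    assert (HjN : In j (Fs N)).
    { replace N with ((N - m) + m)%nat by lia. apply Hincl; auto. }
    destruct (Hd j) as [[M0 [M1 [M2 M3]]] _].
    pose proof (Hdist N a j Ha HjN). pose proof (Hdist N b j Hb HjN).
    pose proof (M3 (proj1_sig (xs a) j) (proj1_sig (xs N) j) (proj1_sig (xs b) j)).
    pose proof (M2 (proj1_sig (xs a) j) (proj1_sig (xs N) j)).
    specialize (HN1 N ltac:(lia)). rewrite Rabs_right in HN1.
    2:{ left. apply pow_lt. lra. }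
    pose proof (Hrs N).
    assert (r0 * (/2)^N < e / 2).
    { apply Rmult_lt_compat_l with (r := 2 * r0) in HN1; [|lra].
      unfold Rdiv in HN1. rewrite <- Rmult_assoc, Rinv_r_simpl_m in HN1 by lra. lra. }
    cbv beta. lra. }
  pose (yfun := fun j => match excluded_middle_informative (exists m, In j (Fs m)) with
                         | left _ => epsilon (inhabits (tv_zero (E j)))
                                       (fun l => metric_conv (dd j) (fun k => proj1_sig (xs k) j) l)
                         | right _ => tv_zero (E j) end).
  assert (Hyc : countable_set (supp yfun)).
  { apply (countable_sub _ (fun j => exists m, In j (Fs m))); [|apply countable_family].
    intros j Hj. unfold supp, yfun in Hj. destruct excluded_middle_informative; auto. tauto. }
  pose (y := exist (fun z : forall j, E j => countable_set (supp z)) yfun Hyc).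
  assert (Hlim : forall j m, In j (Fs m) -> metric_conv (dd j) (fun k => proj1_sig (xs k) j) (yfun j)).
  { intros j m Hj. unfold yfun. destruct excluded_middle_informative as [h|h].
    - apply epsilon_spec. destruct (Hd j) as [_ [_ [_ C]]]. apply C. eapply Hcau; eauto.
    - exfalso; eauto. }
  assert (Hin : forall n, cball E dd (xs n) (Fs n) (rs n) y).
  { intros n j Hj. simpl. apply le_eps. intros e He.
    destruct (Hlim j n Hj e He) as [N HN].
    specialize (HN (Nat.max N n) ltac:(lia)).
    pose proof (Hdist n (Nat.max N n) j ltac:(lia) Hj).
    destruct (Hd j) as [[M0 [M1 [M2 M3]]] _].
    pose proof (M3 (proj1_sig (xs n) j) (proj1_sig (xs (Nat.max N n)) j) (yfun j)). lra. }
  exists y. split.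
  - apply HF0. apply (Hin 0%nat).
  - intros n. destruct (Pos n) as [_ [_ [_ [_ h]]]]. apply (h y (Hin (S n))).
Qed.

Lemma small_inv (e : R) : 0 < e -> exists K, forall k, (K <= k)%nat -> / (INR k + 1) < e.
Proof.
  intros He. destruct (INR_unbounded (/ e)) as [n Hn]. exists n. intros k Hk.
  apply le_INR in Hk. pose proof (pos_INR n).
  rewrite <- (Rinv_inv e). apply Rinv_lt_contravar.
  - apply Rmult_lt_0_compat. apply Rinv_0_lt_compat; auto. lra.
  - lra.
Qed.

Lemma list_K {J : Type} (P : J -> nat -> Prop) (l : list J) :
  (forall j, In j l -> exists K, forall k, (K <= k)%nat -> P j k) ->
  exists K, forall k, (K <= k)%nat -> forall j, In j l -> P j k.
Proof.
  induction l as [|a l IH]; intros H.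
  - exists 0%nat. intros k _ j [].
  - destruct (H a (or_introl eq_refl)) as [K1 H1].
    destruct IH as [K2 H2]. { intros j Hj. apply H. right; auto. }
    exists (Nat.max K1 K2). intros k Hk j [<-|Hj].
    + apply H1. lia.
    + apply H2; auto. lia.
Qed.

Fixpoint optl {J : Type} (l : list (option J)) : list J :=
  match l with nil => nil | Some j :: l' => j :: optl l' | None :: l' => optl l' end.

Lemma optl_in {J : Type} (l : list (option J)) j : In (Some j) l -> In j (optl l).
Proof.
  induction l as [|[a|] l IH]; simpl; auto.
  - intros [h|h]. left; congruence. right; auto.
  - intros [h|h]. discriminate. auto.
Qed.

Lemma sigma_fu {J : Type} (E : J -> tvs) dd (Hd : forall j, good_metric (E j) (dd j)) :
  frechet_urysohn (sigma_open E).
Proof.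
  intros A x Hcl.
  destruct (choice_dep (fun (p : sigma_product E) (s : nat -> option J) =>
     forall t, supp (proj1_sig p) t -> exists n, s n = Some t)) as [en Hen].
  { intros p. exact (proj2_sig p). }
  pose (Ff := fun (L : list (sigma_product E)) (k : nat) =>
         flat_map (fun p => optl (map (en p) (seq 0 (S k)))) (x :: L)).
  pose (pick := fun L k => epsilon (inhabits x)
          (fun a => A a /\ oball E dd x (Ff L k) (/ (INR k + 1)) a)).
  assert (Hpick : forall L k, A (pick L k) /\ oball E dd x (Ff L k) (/ (INR k + 1)) (pick L k)).
  { intros L k. apply epsilon_spec.
    destruct (Hcl (oball E dd x (Ff L k) (/ (INR k + 1)))) as [a [h1 h2]].
    - apply oball_open; auto.
    - intros j _. destruct (Hd j) as [[_ [M1 _]] _]. rewrite (proj2 (M1 _ _) eq_refl).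
      apply Rinv_0_lt_compat. pose proof (pos_INR k). lra.
    - exists a; auto. }
  pose (Lk := nat_rect (fun _ => list (sigma_product E)) nil (fun k L => L ++ (pick L k :: nil))).
  pose (u := fun k => pick (Lk k) k).
  assert (HL : forall k i, (i < k)%nat -> In (u i) (Lk k)).
  { induction k; intros i Hi. lia. simpl. apply in_or_app.
    destruct (Nat.eq_dec i k) as [->|h]. right; left; reflexivity. left; apply IHk; lia. }
  assert (HF : forall L k p t j, In p (x :: L) -> en p t = Some j -> (t <= k)%nat -> In j (Ff L k)).
  { intros L k p t j Hp He Ht. unfold Ff. apply in_flat_map. exists p. split; auto.
    apply optl_in. rewrite <- He. apply in_map. apply in_seq. lia. }
  exists u. split.
  { intros n. apply Hpick. }
  intros U HU Ux. destruct (sigma_open_basic E U x HU Ux) as [l [V [H1 H2]]].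
  destruct (list_K (fun j k => V j (proj1_sig (u k) j)) l) as [K HK].
  2:{ exists K. intros n Hn. apply H2. intros j Hj. apply HK; auto. }
  intros j Hj. destruct (H1 j Hj) as [Vo Vx].
  destruct (classic ((exists t, en x t = Some j) \/ (exists i t, en (u i) t = Some j))) as [S|NS].
  - assert (HK0 : exists K0, forall k, (K0 <= k)%nat -> In j (Ff (Lk k) k)).
    { destruct S as [[t Ht]|[i [t Ht]]].
      - exists t. intros k Hk. apply (HF _ k x t j); auto. left; auto.
      - exists (Nat.max (S i) t). intros k Hk. apply (HF _ k (u i) t j); auto; [|lia].
        right. apply HL. lia. }
    destruct HK0 as [K0 HK0].
    destruct (open_ball _ _ (Hd j) _ _ Vo Vx) as [e [He HV]].
    destruct (small_inv e He) as [K1 HK1].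
    exists (Nat.max K0 K1). intros k Hk. apply HV.
    specialize (HK1 k ltac:(lia)).
    destruct (Hpick (Lk k) k) as [_ h]. specialize (h j (HK0 k ltac:(lia))). simpl in h.
    fold (u k) in h. lra.
  - exists 0%nat. intros k _.
    assert (Ex : proj1_sig x j = tv_zero (E j)).
    { apply NNPP. intros h. destruct (Hen x j h) as [t Ht]. apply NS. left; eauto. }
    assert (Eu : proj1_sig (u k) j = tv_zero (E j)).
    { apply NNPP. intros h. destruct (Hen (u k) j h) as [t Ht]. apply NS. right; eauto. }
    rewrite Eu, <- Ex. exact Vx.
Qed.

Definition famj {J : Type} (P : J -> Type) (j : J) (a : P j) (b : forall k, P k) : forall k, P k :=
  fun k => match excluded_middle_informative (j = k) with
           | left H => eq_rect j P a k H | right _ => b k end.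

Lemma famj_j {J : Type} (P : J -> Type) j a b : famj P j a b j = a.
Proof.
  unfold famj. destruct excluded_middle_informative as [H|H].
  - rewrite (proof_irrelevance _ H eq_refl). reflexivity.
  - exfalso; auto.
Qed.

Lemma famj_k {J : Type} (P : J -> Type) j a b k : j <> k -> famj P j a b k = b k.
Proof. intros h. unfold famj. destruct excluded_middle_informative as [H|H]; [exfalso; auto|reflexivity]. Qed.

Lemma ej_proof {J : Type} (E : J -> tvs) j (v : E j) :
  countable_set (supp (famj E j v (fun k => tv_zero (E k)))).
Proof.
  exists (fun _ => Some j). intros t Ht. exists 0%nat.
  destruct (classic (j = t)) as [->|h]; auto.
  exfalso. apply Ht. exact (famj_k (fun k => E k) j v (fun k => tv_zero (E k)) t h).
Qed.

Definition ej {J : Type} (E : J -> tvs) j (v : E j) : sigma_product E :=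
  exist (fun z : forall k, E k => countable_set (supp z)) _ (ej_proof E j v).

Definition cyl1 {J : Type} (E : J -> tvs) j (W : E j -> Prop) : sigma_product E -> Prop :=
  cyl E (j :: nil) (famj (fun k => E k -> Prop) j W (fun _ _ => True)).

Lemma cyl1_iff {J : Type} (E : J -> tvs) j W w : cyl1 E j W w <-> W (proj1_sig w j).
Proof.
  unfold cyl1, cyl. split.
  - intros h. specialize (h j (or_introl eq_refl)). rewrite famj_j in h. exact h.
  - intros h k [<-|[]]. rewrite famj_j. exact h.
Qed.

Lemma cyl1_open {J : Type} (E : J -> tvs) j W : tv_open (E j) W -> sigma_open E (cyl1 E j W).
Proof.
  intros H. apply cyl_open. intros k [<-|[]]. rewrite famj_j. exact H.
Qed.

Lemma no_good {J : Type} (hJ : ~ countable_set (fun _ : J => True)) (Good : nat -> list J -> Prop) :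
  (forall j, exists m, (exists l, Good m l) /\ forall l, Good m l -> In j l) -> False.
Proof.
  intros H.
  destruct (choice_dep (fun m (l : list J) => (exists l', Good m l') -> Good m l)) as [lm Hlm].
  { intros m. destruct (classic (exists l', Good m l')) as [[l' h]|h].
    - exists l'. auto.
    - exists nil. tauto. }
  apply hJ. apply (countable_sub _ (fun j => exists m, In j (lm m))); [|apply countable_family].
  intros j _. destruct (H j) as [m [e h]]. exists m. apply h, Hlm, e.
Qed.

Lemma metric_pos (E : tvs) d (Hd : good_metric E d) v : v <> tv_zero E -> 0 < d (tv_zero E) v.
Proof.
  intros Hv. destruct Hd as [[M0 [M1 _]] _]. destruct (M0 (tv_zero E) v) as [h|h]; auto.
  exfalso. apply Hv. symmetry. apply M1. auto.
Qed.

Lemma sigma_not_metrizable {J : Type} (E : J -> tvs) dd (Hd : forall j, good_metric (E j) (dd j))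
  (hnz : forall j, nonzero_tvs (E j)) (hJ : ~ countable_set (fun _ : J => True)) :
  ~ metrizable (sigma_open E).
Proof.
  intros [d [[M0 [M1 [M2 M3]]] Hi]].
  apply (no_good hJ (fun m l => forall y : sigma_product E,
     (forall i, In i l -> proj1_sig y i = tv_zero (E i)) -> d (sigma_zero E) y < / (INR m + 1))).
  intros j. destruct (hnz j) as [v Hv]. pose proof (metric_pos _ _ (Hd j) v Hv) as Hdl.
  set (dl := dd j (tv_zero (E j)) v) in *.
  set (Oj := cyl1 E j (fun y => dd j (tv_zero (E j)) y < dl)).
  assert (HO : sigma_open E Oj) by (apply cyl1_open, ball_open, Hd).
  assert (H0 : Oj (sigma_zero E)).
  { apply cyl1_iff. simpl. destruct (Hd j) as [[_ [N1 _]] _]. rewrite (proj2 (N1 _ _) eq_refl). exact Hdl. }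
  destruct (proj1 (Hi Oj) HO _ H0) as [e [He HOe]].
  destruct (small_inv e He) as [m Hm]. exists m. split.
  - assert (HB : sigma_open E (fun y => d (sigma_zero E) y < / (INR m + 1))).
    { apply Hi. intros y Hy. exists (/ (INR m + 1) - d (sigma_zero E) y). split. lra.
      intros z Hz. pose proof (M3 (sigma_zero E) y z). lra. }
    destruct (sigma_open_basic E _ (sigma_zero E) HB) as [l [V [B1 B2]]].
    { rewrite (proj2 (M1 _ _) eq_refl). apply Rinv_0_lt_compat. pose proof (pos_INR m). lra. }
    exists l. intros y Hy. apply B2. intros i Hi'. rewrite (Hy i Hi'). apply (B1 i Hi').
  - intros l Hl. apply NNPP. intros nj.
    assert (Hy := Hl (ej E j v)). simpl in Hy.
    assert (Oj (ej E j v)).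
    { apply HOe. apply Rlt_le_trans with (/ (INR m + 1)); [|left; apply Hm; lia].
      apply Hy. intros i Hi'. simpl. apply (famj_k (fun k => E k)). intros ->. auto. }
    apply cyl1_iff in H. simpl in H. rewrite famj_j in H. fold dl in H. lra.
Qed.

Lemma sigma_not_cn {J : Type} (E : J -> tvs) dd (Hd : forall j, good_metric (E j) (dd j))
  (hnz : forall j, nonzero_tvs (E j)) (hJ : ~ countable_set (fun _ : J => True)) :
  ~ countable_cn_character (sigma_open E).
Proof.
  intros Hcn. destruct (Hcn (sigma_zero E)) as [NN [[s Hs] Hnet]].
  pose (G := fun m (z : sigma_product E) => exists N y, s (fst (Cantor.of_nat m)) = Some N /\ N y /\
                 z = sigma_scale E (INR (snd (Cantor.of_nat m)) + 1) y).
  pose (clG := fun m p => forall U, sigma_open E U -> U p -> exists w, U w /\ G m w).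
  apply (no_good hJ (fun m l => exists p, forall y : sigma_product E,
     (forall i, In i l -> proj1_sig y i = tv_zero (E i)) -> clG m p /\ clG m (sigma_add E p y))).
  intros j. destruct (hnz j) as [v Hv]. pose proof (metric_pos _ _ (Hd j) v Hv) as Hdl.
  set (dl := dd j (tv_zero (E j)) v) in *.
  set (O' := cyl1 E j (fun y => dd j (tv_zero (E j)) y < dl / 4)).
  assert (HO : sigma_open E O') by (apply cyl1_open, ball_open, Hd).
  assert (H0 : O' (sigma_zero E)).
  { apply cyl1_iff. simpl. destruct (Hd j) as [[_ [N1 _]] _]. rewrite (proj2 (N1 _ _) eq_refl). lra. }
  pose (P := fun n => exists N, s n = Some N /\ forall w, N w -> O' w).
  assert (Hcov : forall z, exists n k N y, s n = Some N /\ N y /\ (forall w, N w -> O' w) /\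
                     z = sigma_scale E (INR k + 1) y).
  { intros z.
    destruct (Hnet O') as [U [HU [U0 UW]]]. { exists O'. split; auto. }
    destruct (sigma_open_basic E U _ HU U0) as [l [V [B1 B2]]].
    assert (Hc : forall i, exists dlt : R, In i l -> 0 < dlt /\
              forall t, Rabs t < dlt -> V i (tv_scale (E i) t (proj1_sig z i))).
    { intros i. destruct (classic (In i l)) as [h|h]; [|exists 1; tauto].
      destruct (B1 i h) as [o vi]. simpl in vi.
      destruct (tvs_scale_cont _ _ _ _ _ (tv_ax (E i)) 0 (proj1_sig z i) (V i) o)
        as [dl' [W' [h1 [h2 [h3 h4]]]]].
      { rewrite scale0. exact vi. }
      exists dl'. intros _. split; auto. intros t Ht. apply h4; auto. rewrite Rminus_0_r; auto. }
    destruct (choice_dep _ Hc) as [f Hf].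
    destruct (small_inv (lmin f l 1)) as [K HK].
    { apply lmin_pos. lra. intros i Hi; apply Hf; auto. }
    set (y := sigma_scale E (/ (INR K + 1)) z).
    assert (Uy : U y).
    { apply B2. intros i Hi. simpl. apply (Hf i Hi). rewrite Rabs_right.
      - pose proof (lmin_le f l 1 i Hi). specialize (HK K (le_n K)). lra.
      - left. apply Rinv_0_lt_compat. pose proof (pos_INR K). lra. }
    destruct (UW y Uy) as [N [HN [N0 [NO Ny]]]].
    destruct (Hs N HN) as [n Hn].
    exists n, K, N, y. split; auto. split; auto. split; auto.
    apply sig_eq. simpl. apply functional_extensionality_dep. intros i.
    rewrite (vs_scaleA _ _ _ _ (vsE (E i))). rewrite Rinv_r.
    - symmetry; apply (vs_scale1 _ _ _ _ (vsE (E i))).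
    - pose proof (pos_INR K). lra. }
  pose (Dm := fun m z => P (fst (Cantor.of_nat m)) ->
                exists U', (sigma_open E U' /\ forall w, U' w -> ~ G m w) /\ U' z).
  assert (HDo : forall m, sigma_open E (Dm m)).
  { intros m. destruct (classic (P (fst (Cantor.of_nat m)))) as [h|h].
    - replace (Dm m) with (fun z => exists U', (sigma_open E U' /\ forall w, U' w -> ~ G m w) /\ U' z).
      + apply (sigma_top E). intros U' [h1 _]; exact h1.
      + apply set_ext. intros z. unfold Dm. tauto.
    - replace (Dm m) with (fun _ : sigma_product E => True).
      + apply (sigma_top E).
      + apply set_ext; intros z; unfold Dm; tauto. }
  assert (Hnd : exists m, ~ dense (sigma_open E) (Dm m)).
  { apply NNPP. intros Hn.
    assert (Hall : forall m, sigma_open E (Dm m) /\ dense (sigma_open E) (Dm m)).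
    { intros m. split; auto. apply NNPP. intros h. apply Hn. exists m; auto. }
    destruct (sigma_baire E dd Hd Dm Hall (fun _ => True)) as [z [_ Hz]].
    { apply (sigma_top E). } { exists (sigma_zero E); auto. }
    destruct (Hcov z) as [n [k [N [y [h1 [h2 [h3 h4]]]]]]].
    set (m := Cantor.to_nat (n, k)).
    assert (Hm : Cantor.of_nat m = (n, k)) by apply Cantor.cancel_of_to.
    destruct (Hz m) as [U' [[_ HU'] U'z]].
    { rewrite Hm. simpl. exists N; auto. }
    apply (HU' z U'z). exists N, y. rewrite Hm. simpl. auto. }
  destruct Hnd as [m Hm].
  assert (Hm' : exists U, sigma_open E U /\ (exists x, U x) /\ forall x, U x -> ~ Dm m x).
  { apply NNPP. intros h. apply Hm. intros U HU Hne. apply NNPP. intros h2. apply h.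
    exists U. repeat split; auto. intros x Ux Dx. apply h2. exists x; auto. }
  destruct Hm' as [U [HU [[p Up] HnD]]].
  assert (HP : P (fst (Cantor.of_nat m))).
  { apply NNPP. intros h. apply (HnD p Up). intros h'. contradiction. }
  assert (HclU : forall x, U x -> clG m x).
  { intros x Ux U' HU' U'x. apply NNPP. intros h. apply (HnD x Ux). intros _.
    exists U'. split; auto. split; auto. intros w U'w Gw. apply h. exists w; auto. }
  exists m. split.
  - destruct (sigma_open_basic E U p HU Up) as [l [V [B1 B2]]]. exists l, p. intros y Hy. split.
    + apply HclU; auto.
    + apply HclU. apply B2. intros i Hi. simpl. rewrite (Hy i Hi), (vs_add0 _ _ _ _ (vsE (E i))).
      apply B1; auto.
  - intros l [p' Hp']. apply NNPP. intros nj.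
    set (k := snd (Cantor.of_nat m)). set (c := INR k + 1).
    assert (Hc : 0 < c) by (unfold c; pose proof (pos_INR k); lra).
    destruct HP as [N0 [HN0 HNO]].
    assert (Key : forall q, clG m q ->
              dd j (tv_zero (E j)) (tv_scale (E j) (/ c) (proj1_sig q j)) <= dl / 4).
    { intros q Hq. apply le_eps. intros e He.
      destruct (tvs_scale_cont _ _ _ _ _ (tv_ax (E j)) (/ c) (proj1_sig q j)
          (fun b => dd j (tv_scale (E j) (/c) (proj1_sig q j)) b < e)) as [dlt [V' [h1 [h2 [h3 h4]]]]].
      { apply ball_open, Hd. }
      { destruct (Hd j) as [[_ [N1 _]] _]. rewrite (proj2 (N1 _ _) eq_refl). lra. }
      destruct (Hq (cyl1 E j V') (cyl1_open E j V' h2)) as [w [w1 w2]].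
      { apply cyl1_iff; auto. }
      destruct w2 as [N [y' [g1 [g2 g3]]]]. fold k in g3. fold c in g3.
      rewrite HN0 in g1. injection g1 as <-.
      assert (Oy : O' y') by auto. apply cyl1_iff in Oy.
      apply cyl1_iff in w1. rewrite g3 in w1. simpl in w1.
      assert (Hlt : Rabs (/ c - / c) < dlt) by (rewrite Rminus_diag, Rabs_R0; lra).
      specialize (h4 (/ c) _ Hlt w1).
      rewrite (vs_scaleA _ _ _ _ (vsE (E j))), Rinv_l, (vs_scale1 _ _ _ _ (vsE (E j))) in h4 by lra.
      destruct (Hd j) as [[_ [_ [M2 M3]]] _].
      pose proof (M3 (tv_zero (E j)) (proj1_sig y' j) (tv_scale (E j) (/ c) (proj1_sig q j))) as T.
      pose proof (M2 (proj1_sig y' j) (tv_scale (E j) (/ c) (proj1_sig q j))) as T2.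
      lra. }
    destruct (Hp' (ej E j (tv_scale (E j) c v))) as [C1 C2].
    { intros i Hi. simpl. apply (famj_k (fun k => E k)). intros ->. auto. }
    apply Key in C1. apply Key in C2. simpl in C2. rewrite famj_j in C2.
    rewrite (vs_scaleDr _ _ _ _ (vsE (E j))), (vs_scaleA _ _ _ _ (vsE (E j))), Rinv_l,
      (vs_scale1 _ _ _ _ (vsE (E j))) in C2 by lra.
    set (a := tv_scale (E j) (/ c) (proj1_sig p' j)) in *.
    destruct (Hd j) as [[_ [_ [M2 M3]]] [_ [TI _]]].
    assert (Hdl2 : dl = dd j a (tv_add (E j) a v)).
    { unfold dl. rewrite <- (TI (tv_zero (E j)) v a). f_equal.
      - rewrite (vs_addC _ _ _ _ (vsE (E j))). apply (vs_add0 _ _ _ _ (vsE (E j))).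
      - apply (vs_addC _ _ _ _ (vsE (E j))). }
    pose proof (M3 a (tv_zero (E j)) (tv_add (E j) a v)).
    pose proof (M2 a (tv_zero (E j))). lra.
Qed.

Theorem mainTheorem15 (J : Type) (E : J -> tvs)
  (hnz : forall j, nonzero_tvs (E j))
  (hcm : forall j, complete_metrizable_tvs (E j))
  (hJ : ~ countable_set (fun _ : J => True)) :
  is_tvs (sigma_zero E) (sigma_add E) (sigma_opp E) (sigma_scale E) (sigma_open E) /\
  baire (sigma_open E) /\
  ~ metrizable (sigma_open E) /\
  frechet_urysohn (sigma_open E) /\
  ~ countable_cn_character (sigma_open E).
Proof.
  destruct (choice_dep (fun j d => good_metric (E j) d) hcm) as [dd Hd].
  split; [apply sigma_tvs|].
  split; [apply (sigma_baire E dd Hd)|].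
  split; [apply (sigma_not_metrizable E dd Hd hnz hJ)|].
  split; [apply (sigma_fu E dd Hd)|].
  apply (sigma_not_cn E dd Hd hnz hJ).
Qed.
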